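(* Let $T$ be a positive integer, $f:\mathbb{R}^{T}\to\mathbb{R}$ differentiable with $\mathrm{prog}(\nabla f(x))\le\mathrm{prog}(x)+1$ for all $x$, $0<\tau_1\le\dots\le\tau_n$, $p\in(0,1]$, and let the oracle be $O=O^G_{\tau_1,\dots,\tau_n}$ with $\mathcal{D}=\mathrm{Bernoulli}(p)^{\otimes n}$ and $$[G(x;\xi)]_j=\nabla_jf(x)\Big(1+\mathbb{1}[j>\mathrm{prog}(x)]\Big(\frac\xi p-1\Big)\Big),\quad \xi\in\{0,1\},\ j\in[T].$$ Let $A$ be a zero-respecting algorithm run in the time oracle protocol with this oracle. Then for every $\delta\in(0,1]$ and every $t\ge0$ with $$t\le\frac12\min_{m\in[n]}\tau_m\Big(1+\frac1{4pm}\Big)\Big(\frac T2+\log\delta\Big),$$ with probability at least $1-\delta$ we have $\mathrm{prog}(x^k)<T$ for all $k\in S_t$.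
   Context: $\mathrm{prog}(x)=\max\{i\ge0:x_i\ne0\}$ with convention $x_0\equiv1$; $\mathrm{supp}(x)=\{i:x_i\ne0\}$; $\mathbb{N}_0=\{0,1,\dots\}$. Time oracle protocol (single oracle). An algorithm is $A^0\in\mathbb{R}_{\ge0}\times\mathbb{R}^d$ and $A^k:(\mathbb{R}^d)^k\to\mathbb{R}_{\ge0}\times\mathbb{R}^d$ ($k\ge1$) such that the first (time) component of $A^k(g^1,\dots,g^k)$ is at least that of $A^{k-1}(g^1,\dots,g^{k-1})$. Set $t^0=0$ and oracle state $s^0=(0,0,0)\in\mathbb{R}_{\ge0}\times\mathbb{R}^d\times\{0,1\}$. For $k=0,1,\dots$: $(t^{k+1},x^k)=A^k(g^1,\dots,g^k)$; draw $\xi^{k+1}=(\xi^{k+1}_1,\dots,\xi^{k+1}_n)\sim\mathcal{D}$ independently of the past; $(s^{k+1},g^{k+1})=O(t^{k+1},x^k,s^k,\xi^{k+1})$. $S_t=\{k\in\mathbb{N}_0:t^k\le t\}$. Zero-respecting: $\mathrm{supp}(x^k)\subseteq\bigcup_{j=1}^k\mathrm{supp}(g^j)$ for all $k$ and all realizations. Synchronized oracle: for a mapping $G$, $O^G_{\tau_1,\dots,\tau_n}(t,x,(s_t,s_x,s_q),(\xi_1,\dots,\xi_n))$ returns $((t,x,1),0)$ if $s_q=0$, and if $s_q=1$ returns $\big((0,0,0),\sum_{i\in[n]:\,s_t+\tau_i\le t}G(s_x;\xi_i)\big)$ (empty sum $=0$). *)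

(* Defs.v *)
From HB Require Import structures.
From mathcomp Require Import all_boot all_order all_algebra.
From mathcomp Require Import all_classical all_reals all_analysis.
Set Implicit Arguments. Unset Strict Implicit. Unset Printing Implicit Defensive.
Import Order.TTheory GRing.Theory Num.Theory.
Import numFieldNormedType.Exports.
Local Open Scope classical_set_scope.
Local Open Scope ring_scope.

Section Defs.
Variables (R : realType) (T n : nat).

(* Vectors of R^T are row vectors 'rV[R]_T; the paper's coordinate j in [T]
   (1-based) is the entry with 0-based index j-1. *)

(* prog(x) = max{ i >= 0 : x_i <> 0 } with x_0 = 1, i.e. the largest 1-based
   index of a nonzero coordinate, or 0 if x = 0. *)
Definition prog (x : 'rV[R]_T) : nat :=
  \max_(j < T | x 0 j != 0) j.+1.

Definition supp (x : 'rV[R]_T) : set 'I_T := [set j | x 0 j != 0].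

Definition grad (f : 'rV[R]_T -> R) (x : 'rV[R]_T) : 'rV[R]_T :=
  \row_j ('D_(delta_mx 0 j) f x).

Definition Gmap (f : 'rV[R]_T -> R) (p : R) (x : 'rV[R]_T) (xi : bool)
  : 'rV[R]_T :=
  \row_j ((grad f x) 0 j *
     (1 + (if (prog x < j.+1)%N then (xi%:R / p - 1) else 0))).

Definition ostate := (R * 'rV[R]_T * bool)%type.

Definition sync_oracle (G : 'rV[R]_T -> bool -> 'rV[R]_T) (tau : 'I_n -> R)
  (t : R) (x : 'rV[R]_T) (s : ostate) (xi : 'I_n -> bool)
  : ostate * 'rV[R]_T :=
  let: (st, sx, sq) := s in
  if ~~ sq then ((t, x, true), 0)
  else ((0, 0, false), \sum_(i < n | st + tau i <= t) G sx (xi i)).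

(* An algorithm: A^k(g^1,...,g^k) = A [:: g^1; ...; g^k]
   (only its values on sequences are used; A^k is A on sequences of size k). *)
Definition algorithm := seq 'rV[R]_T -> R * 'rV[R]_T.

Definition valid_algorithm (A : algorithm) : Prop :=
  (forall s, 0 <= (A s).1) /\
  (forall s g, (A s).1 <= (A (rcons s g)).1).

(* The run of the time oracle protocol for a given realization of the noise:
   noise k = xi^{k+1}.  history k = ([:: g^1; ...; g^k], s^k). *)
Fixpoint history (O : R -> 'rV[R]_T -> ostate -> ('I_n -> bool) ->
                      ostate * 'rV[R]_T)
   (A : algorithm) (noise : nat -> 'I_n -> bool) (k : nat)
   : seq 'rV[R]_T * ostate :=
  match k with
  | 0 => ([::], (0, 0, false))
  | k'.+1 =>
      let: (gs, s) := history O A noise k' in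
      let: (tk, xk) := A gs in
      let: (s', g) := O tk xk s (noise k') in
      (rcons gs g, s')
  end.

Definition grads O A noise k := (history O A noise k).1.
Definition iterate O A noise k : 'rV[R]_T := (A (grads O A noise k)).2.
(* t^k, with t^0 = 0 and (t^{k+1}, x^k) = A^k(...) *)
Definition time O A noise k : R :=
  if k is k'.+1 then (A (grads O A noise k')).1 else 0.

Definition zero_respecting O (A : algorithm) : Prop :=
  forall (noise : nat -> 'I_n -> bool) (k : nat),
    supp (iterate O A noise k) `<=`
    \bigcup_(g in [set g | g \in grads O A noise k]) supp g.

End Defs.

(* xi : Omega -> nat -> 'I_n -> bool, with xi w k = xi^{k+1}(w), is a sequence
   of i.i.d. random vectors with law Bernoulli(p)^{(x) n}: every coordinate is
   a (measurable) random variable, and the joint law of (xi^1,...,xi^K) is the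
   product Bernoulli law, for every K. *)
Definition iid_bernoulli_noise {R : realType} {d : measure_display}
  {Omega : measurableType d} (P : probability Omega R) (n : nat) (p : R)
  (xi : Omega -> nat -> 'I_n -> bool) : Prop :=
  (forall k i, measurable [set w | xi w k i]) /\
  (forall (K : nat) (b : nat -> 'I_n -> bool),
     P [set w | forall k i, (k < K)%N -> xi w k i = b k i] =
     (\prod_(k < K) \prod_(i < n) (if b k i then p else 1 - p))%:E).

(* Main.v *)
Require Import Defs.
From HB Require Import structures.
From mathcomp Require Import all_boot all_order all_algebra.
From mathcomp Require Import all_classical all_reals all_analysis.
From mathcomp Require Import ring lra zify.
Import Order.TTheory GRing.Theory Num.Theory.
Import numFieldNormedType.Exports.
Local Open Scope classical_set_scope.
Local Open Scope ring_scope.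


Section Det.
Variables (R : realType) (T n : nat) (f : 'rV[R]_T -> R) (tau : 'I_n -> R)
  (p : R) (A : algorithm R T).
Hypothesis hprog : forall x, (prog (grad f x) <= (prog x).+1)%N.

Local Notation O := (sync_oracle (Gmap f p) tau).
Local Notation hist := (history O A).

Lemma prog_leP0 (v : 'rV[R]_T) m :
  reflect (forall j : 'I_T, v 0 j != 0 -> (j.+1 <= m)%N) (prog v <= m)%N.
Proof. rewrite /prog; exact: bigmax_leqP. Qed.

Lemma prog_leP (v : 'rV[R]_T) m :
  reflect (forall j : 'I_T, (m < j.+1)%N -> v 0 j = 0) (prog v <= m)%N.
Proof.
apply: (iffP (prog_leP0 _ _)) => H j.
  move=> lt; apply/eqP; apply: contraTT lt => nz; rewrite -leqNgt; exact: H.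
move=> nz; rewrite leqNgt; apply/negP => lt; by move/eqP: nz; apply; apply: H.
Qed.

Lemma prog_nz (v : 'rV[R]_T) (j : 'I_T) : v 0 j != 0 -> (j.+1 <= prog v)%N.
Proof. by move=> nz; move: (prog_leP0 v (prog v)) => /(_ (leqnn _)); apply. Qed.

Lemma prog0 : prog (0 : 'rV[R]_T) = 0%N.
Proof. apply/eqP; rewrite -leqn0; apply/prog_leP => j _; by rewrite mxE. Qed.

Lemma prog_sumG sx (S : pred 'I_n) (b : 'I_n -> bool) :
  (prog (\sum_(i < n | S i) Gmap f p sx (b i)) <=
    prog sx + [exists i, S i && b i])%N.
Proof.
apply/prog_leP => j lt; rewrite summxE; apply: big1 => i Si.
rewrite mxE.
have [hj|hj] := leqP (j.+1) (prog sx).+1.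
- case: existsP lt => [[i0 _]|nex] lt; first by lia.
  have ej : j.+1 = (prog sx).+1 by lia.
  have bi : b i = false.
    by apply: negbTE; apply/negP => bi; apply: nex; exists i; rewrite Si.
  rewrite bi ej ltnSn /= mul0r sub0r addrN mulr0 //.
- have : grad f sx 0 j = 0.
    by move: (hprog sx) => /prog_leP; apply.
  by move=> ->; rewrite mul0r.
Qed.


Lemma hist_prefix nu nu' k : (forall j i, (j < k)%N -> nu j i = nu' j i) ->
  hist nu k = hist nu' k.
Proof.
elim: k => [//|k IH] H /=.
rewrite IH; last by move=> j i lt; apply: H; lia.
have -> : nu k = nu' k by apply/funext => i; apply: H.
by [].
Qed.

Lemma hist_step nu k : hist nu k.+1 =
  (rcons (grads O A nu k) (O (A (grads O A nu k)).1 (A (grads O A nu k)).2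
      (hist nu k).2 (nu k)).2,
   (O (A (grads O A nu k)).1 (A (grads O A nu k)).2 (hist nu k).2 (nu k)).1).
Proof.
rewrite /grads /=; case: (history O A nu k) => gs s /=.
case: (A gs) => tk xk /=; by case: (O tk xk s (nu k)).
Qed.

Lemma grads_step nu k : grads O A nu k.+1 =
  rcons (grads O A nu k) (O (A (grads O A nu k)).1 (A (grads O A nu k)).2
      (hist nu k).2 (nu k)).2.
Proof. by rewrite {1}/grads hist_step. Qed.

Lemma state_inv nu k : (hist nu k).2 = ((0:R), (0:'rV[R]_T), false) \/
  exists k', k = k'.+1 /\ (hist nu k).2 = (time O A nu k, iterate O A nu k', true).
Proof.
elim: k => [|k IH]; first by left.
rewrite hist_step /=.
case: IH => [E|[k' [_ E]]]; rewrite E /sync_oracle /=.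
  by right; exists k.
by left.
Qed.

Definition pi nu k := \max_(g <- grads O A nu k) prog g.

Definition succ nu k := let s := (hist nu k).2 in
  s.2 && [exists i, (s.1.1 + tau i <= time O A nu k.+1) && nu k i].

Lemma pi_mono nu k : (pi nu k <= pi nu k.+1)%N.
Proof. by rewrite /pi grads_step -cats1 big_cat /= leq_maxl. Qed.

Lemma pi_monoW nu k k' : (k <= k')%N -> (pi nu k <= pi nu k')%N.
Proof.
elim: k' => [|k' IH]; first by rewrite leqn0 => /eqP ->.
rewrite leq_eqVlt => /orP [/eqP -> //|lt].
exact: (leq_trans (IH lt) (pi_mono _ _)).
Qed.

Hypothesis hzr : zero_respecting O A.

Lemma prog_iterate nu k : (prog (iterate O A nu k) <= pi nu k)%N.
Proof.
apply/prog_leP0 => j nz.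
have [g gin gj] : exists2 g, g \in grads O A nu k & g 0 j != 0.
  have := hzr nu k j nz; case => g /= gin gj; by exists g.
apply: (leq_trans (prog_nz _ _ gj)).
exact: (leq_bigmax_seq _ gin).
Qed.

Lemma pi_step nu k : (pi nu k.+1 <= pi nu k + succ nu k)%N.
Proof.
rewrite {1}/pi grads_step -cats1 big_cat big_seq1 /= geq_max leq_addr /=.
rewrite /succ; case: (state_inv nu k) => [E|[k' [ek E]]]; rewrite E /sync_oracle /=.
  by rewrite prog0.
apply: (leq_trans (prog_sumG _ _ _)).
rewrite leq_add2r; apply: (leq_trans (prog_iterate _ _)).
by rewrite ek; apply: pi_mono.
Qed.

Lemma pi0 nu : pi nu 0 = 0%N.
Proof. by rewrite /pi /grads /= big_nil. Qed.

End Det.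


Section W.
Variables (R : realType) (n : nat) (p : R).
Hypotheses (hp0 : 0 <= p) (hp1 : p <= 1).
Local Notation V := {ffun 'I_n -> bool}.
Definition w (v : V) : R := \prod_(i < n) (if v i then p else 1 - p).

Lemma w_ge0 v : 0 <= w v.
Proof. by apply: prodr_ge0 => i _; case: (v i) => //; rewrite subr_ge0. Qed.

Lemma sum_marg (c : 'I_n -> bool -> R) :
  \sum_(v : V) \prod_i c i (v i) = \prod_i (c i true + c i false).
Proof. by rewrite -bigA_distr_bigA; apply: eq_bigr => i _; rewrite big_bool. Qed.

Lemma sum_w : \sum_v w v = 1.
Proof.
rewrite /w (sum_marg (fun i b => if b then p else 1 - p)).
by apply: big1 => i _; rewrite addrC subrK.
Qed.

Lemma sum_w_i (i0 : 'I_n) : \sum_v w v * (v i0)%:R = p.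
Proof.
transitivity (\sum_(v : V) \prod_i ((if v i then p else 1 - p) *
                    (if i == i0 then (v i)%:R else 1))).
  apply: eq_bigr => v _; rewrite big_split /=; congr (_ * _).
  by rewrite (bigD1 i0) //= eqxx big1 ?mulr1 // => i /negbTE ->.
rewrite (sum_marg (fun i b => (if b then p else 1 - p) * (if i == i0 then b%:R else 1))).
rewrite (bigD1 i0) //= eqxx mulr1 mulr0 addr0 big1 ?mulr1 //.
by move=> i /negbTE ->; rewrite !mulr1 addrC subrK.
Qed.

Lemma sum_w_ex (S : pred 'I_n) :
  \sum_v w v * [exists i, S i && v i]%:R <= \sum_(i | S i) p.
Proof.
apply: (@le_trans _ _ (\sum_v w v * \sum_(i | S i) (v i)%:R)).
  apply: ler_sum => v _; apply: ler_wpM2l; first exact: w_ge0.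
  case: existsP => [[i /andP [Si vi]]|_]; last by apply: sumr_ge0 => i _; case: (v i).
  rewrite (bigD1 i) //= vi lerDl; by apply: sumr_ge0 => j _; case: (v j).
under eq_bigr do rewrite mulr_sumr.
rewrite exchange_big /=; apply: ler_sum => i _; by rewrite sum_w_i.
Qed.

Lemma sum_w_ex1 (b : V -> bool) : \sum_v w v * (b v)%:R <= 1.
Proof.
apply: (@le_trans _ _ (\sum_v w v)); last by rewrite sum_w.
apply: ler_sum => v _; have := w_ge0 v.
by case: (b v) => /= h; rewrite ?mulr1n ?mulr0n ?mulr1 ?mulr0.
Qed.

End W.


Lemma ar1 (R : realFieldType) (b e : R) : 0 <= b -> 1 + b <= e -> 0 <= e - 1.
Proof. move=> *; lra. Qed.
Lemma ar2 (R : realFieldType) (a b c d x : R) :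
  a <= b * (c + d) -> a - x <= b * c - x + b * d.
Proof. move=> *; lra. Qed.
Lemma ar3 (R : realFieldType) (x a b L : R) : x - L * a + L * (a - b) <= x - L * b.
Proof. lra. Qed.
Lemma ar4 (R : realFieldType) (e : R) : e = 1 + 1 * (e - 1).
Proof. lra. Qed.
Lemma ar5 (R : realFieldType) (t0 x t1 : R) : t0 + x <= t1 -> x <= t1 - t0.
Proof. move=> *; lra. Qed.

Section Pot.
Variables (R : realType) (T n : nat) (f : 'rV[R]_T -> R) (tau : 'I_n -> R)
  (p : R) (A : algorithm R T).
Hypothesis hprog : forall x, (prog (grad f x) <= (prog x).+1)%N.
Local Notation O := (sync_oracle (Gmap f p) tau).
Hypothesis hzr : zero_respecting O A.
Hypothesis hA : valid_algorithm A.
Hypotheses (hp0 : 0 <= p) (hp1 : p <= 1).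
Variables (beta L delta t : R).
Hypotheses (hb : 0 <= beta) (hL : 0 <= L) (hd : 0 < delta).
Hypothesis H1 : forall i : 'I_n,
  (expR beta - 1) * Num.min 1 (p * (i.+1)%:R) <= L * tau i.
Hypothesis H2 : - ln delta <= beta * T%:R - L * t.

Local Notation V := {ffun 'I_n -> bool}.
Local Notation piL := (pi R T n f tau p A).
Local Notation wt := (w R n p).

Definition Phi nu k := expR (beta * (piL nu k)%:R - L * time O A nu k).
Definition bad nu k :=
  (time O A nu k <= t) && (T <= prog (iterate O A nu k))%N.
Fixpoint badby nu k :=
  if k is k'.+1 then badby nu k' || bad nu k'.+1 else bad nu 0.
Definition Psi nu k := if badby nu k then delta^-1 else Phi nu k.
Definition upd (nu : nat -> 'I_n -> bool) k (v : V) : nat -> 'I_n -> bool :=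
  fun j => if j == k then (fun i => v i) else nu j.

Lemma agree_all nu nu' k : (forall j i, (j < k)%N -> nu j i = nu' j i) ->
  [/\ forall j, (j <= k)%N -> grads O A nu j = grads O A nu' j,
      forall j, (j <= k)%N -> time O A nu j = time O A nu' j,
      forall j, (j <= k)%N -> iterate O A nu j = iterate O A nu' j,
      forall j, (j <= k)%N -> piL nu j = piL nu' j &
      forall j, (j <= k)%N -> badby nu j = badby nu' j].
Proof.
move=> H.
have G j : (j <= k)%N -> grads O A nu j = grads O A nu' j.
  move=> le; rewrite /grads (hist_prefix _ _ _ _ _ _ _ nu nu' j) //.
  move=> j' i lt; apply: H; lia.
have Tm j : (j <= k)%N -> time O A nu j = time O A nu' j.
  by case: j => [//|j] le; rewrite /time G //; lia.
have It j : (j <= k)%N -> iterate O A nu j = iterate O A nu' j.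
  by move=> le; rewrite /iterate G.
have Pi j : (j <= k)%N -> piL nu j = piL nu' j by move=> le; rewrite /pi G.
have Bd j : (j <= k)%N -> bad nu j = bad nu' j by move=> le; rewrite /bad Tm // It.
split=> //; elim=> [|j IH] le /=; first exact: Bd.
by rewrite IH ?Bd //; lia.
Qed.

Lemma agree_Psi nu nu' k : (forall j i, (j < k)%N -> nu j i = nu' j i) ->
  Psi nu k = Psi nu' k.
Proof.
move=> /agree_all [_ Tm _ Pi Bb].
by rewrite /Psi /Phi Bb // Pi // Tm.
Qed.

Lemma time_mono nu k : time O A nu k <= time O A nu k.+1.
Proof.
case: hA => h0 h1; case: k => [|k]; first exact: h0.
by rewrite /time grads_step; apply: h1.
Qed.

Lemma bad_Phi nu k : bad nu k -> delta^-1 <= Phi nu k.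
Proof.
move=> /andP [tk Tp].
have Tpi : (T <= piL nu k)%N by apply: (leq_trans Tp); apply: prog_iterate.
have -> : delta^-1 = expR (- ln delta) by rewrite expRN lnK // posrE.
rewrite /Phi ler_expR; apply: (le_trans H2).
apply: lerB; first by apply: ler_wpM2l => //; rewrite ler_nat.
exact: ler_wpM2l.
Qed.


Lemma Phi_step nu k : \sum_v wt v * Phi (upd nu k v) k.+1 <= Phi nu k.
Proof.
set t0 := time O A nu k; set t1 := time O A nu k.+1; set pk := piL nu k.
set st := (history O A nu k).2.
set s := fun v : V => st.2 && [exists i, (st.1.1 + tau i <= t1) && v i].
have Hag v : forall j i, (j < k)%N -> upd nu k v j i = nu j i.
  by move=> j i lt; rewrite /upd (ltn_eqF lt).
set X := expR (beta * pk%:R - L * t1).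
have E1 v : Phi (upd nu k v) k.+1 <= X * expR (beta * (s v)%:R).
  have [G _ _ Pi _] := agree_all _ _ _ (Hag v).
  have T1 : time O A (upd nu k v) k.+1 = t1 by rewrite /time G.
  have Sc : succ R T n f tau p A (upd nu k v) k = s v.
    rewrite /succ /s /st.
    have -> : history O A (upd nu k v) k = history O A nu k.
      by apply: hist_prefix => j i lt; apply: Hag.
    rewrite T1; congr (_ && _); apply: eq_existsb => i; by rewrite /upd eqxx.
  have := pi_step R T n f tau p A hprog hzr (upd nu k v) k; rewrite Sc (Pi k (leqnn k)) => hp.
  rewrite /Phi /X -expRD ler_expR T1.
  have : (piL (upd nu k v) k.+1)%:R <= pk%:R + (s v)%:R :> R.
    by rewrite -natrD ler_nat.
  move=> h; apply: ar2; apply: ler_wpM2l => //.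
have E2 v : expR (beta * (s v)%:R) = 1 + (s v)%:R * (expR beta - 1).
  case: (s v); rewrite /= ?(mulr1n, mulr0n, mulr1, mulr0, mul1r, mul0r, expR0, addr0) //.
  by rewrite addrC subrK.
have e1 : 0 <= expR beta - 1.
  exact: ar1 hb (expR_ge1Dx beta).
have tm : 0 <= t1 - t0 by rewrite subr_ge0; exact: time_mono.
have key : (expR beta - 1) * \sum_v wt v * (s v)%:R <= L * (t1 - t0).
  case: (state_inv R T n f tau p A nu k) => [E|[k' [ek E]]].
    rewrite big1 ?mulr0; first exact: mulr_ge0.
    by move=> v _; rewrite /s /st E /= mulr0n mulr0.
  have Hs : \sum_v wt v * (s v)%:R <=
            Num.min 1 (\sum_(i | t0 + tau i <= t1) p).
    rewrite le_min; apply/andP; split; first exact: sum_w_ex1.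
    rewrite /s /st E /= -/t0; exact: (sum_w_ex R n p hp0 hp1 (fun i => t0 + tau i <= t1)).
  apply: (le_trans (ler_wpM2l e1 Hs)).
  case: (boolP [exists i, t0 + tau i <= t1]) => [/existsP [i0 Si0]| nS].
    case: (@arg_maxnP _ i0 (fun i => t0 + tau i <= t1) (fun i : 'I_n => val i) Si0)
      => i Si Hmax.
    have sumS : \sum_(j | t0 + tau j <= t1) p <= p * (i.+1)%:R.
      apply: (@le_trans _ _ (\sum_(j < n | (j < i.+1)%N) p)).
        rewrite big_mkcond [leRHS]big_mkcond; apply: ler_sum => j _.
        case: ifP => Sj; first by rewrite (_ : (j < i.+1)%N) //; exact: Hmax.
        by case: ifP.
      rewrite -big_ord_widen; last exact: ltn_ord i.
      by rewrite sumr_const card_ord mulr_natr.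
    apply: (@le_trans _ _ ((expR beta - 1) * Num.min 1 (p * (i.+1)%:R))).
      apply: ler_wpM2l => //; rewrite le_min !ge_min lexx /= sumS orbT //.
    apply: (le_trans (H1 i)); apply: ler_wpM2l => //; exact: ar5.
  have -> : \sum_(j | t0 + tau j <= t1) p = 0.
    apply: big_pred0 => j; apply/negP => Sj; move/negP: nS; apply.
    by apply/existsP; exists j.
  have : Num.min 1 (0:R) <= 0 by rewrite ge_min lexx orbT.
  move=> h; have := ler_wpM2l e1 h; rewrite mulr0 => h'.
  apply: (le_trans h'); exact: mulr_ge0.
apply: (@le_trans _ _ (\sum_v wt v * (X * (1 + (s v)%:R * (expR beta - 1))))).
  apply: ler_sum => v _; apply: ler_wpM2l; first exact: w_ge0.
  by rewrite -E2; apply: E1.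
have -> : \sum_v wt v * (X * (1 + (s v)%:R * (expR beta - 1))) =
    X * \sum_v wt v + X * (expR beta - 1) * \sum_v wt v * (s v)%:R.
  by rewrite !mulr_sumr -big_split /=; apply: eq_bigr => v _; ring.
rewrite sum_w // mulr1.
have hX : 0 <= X by exact: expR_ge0.
apply: (@le_trans _ _ (X * expR (L * (t1 - t0)))).
  rewrite -mulrA -{1}(mulr1 X) -mulrDr; apply: ler_wpM2l => //.
  apply: le_trans (expR_ge1Dx _); by rewrite lerD2l.
by rewrite /X /Phi -expRD ler_expR -/t0 -/pk; exact: ar3.
Qed.

Lemma Psi_step nu k : \sum_v wt v * Psi (upd nu k v) k.+1 <= Psi nu k.
Proof.
have Hag v : forall j i, (j < k)%N -> upd nu k v j i = nu j i.
  by move=> j i lt; rewrite /upd (ltn_eqF lt).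
have Bb v : badby (upd nu k v) k = badby nu k.
  by have [_ _ _ _ B] := agree_all _ _ _ (Hag v); apply: B.
rewrite {2}/Psi; case: ifP => B.
  under eq_bigr => v _ do rewrite /Psi /= Bb B /=.
  by rewrite -mulr_suml sum_w // mul1r.
apply: (le_trans _ (Phi_step nu k)); apply: ler_sum => v _.
apply: ler_wpM2l; first exact: w_ge0.
rewrite /Psi /= Bb B /=; case: ifP => // bd; exact: bad_Phi.
Qed.

Lemma Psi0 nu : (0 < T)%N -> Psi nu 0 = 1.
Proof.
move=> hT; rewrite /Psi /= /bad.
have : (prog (iterate O A nu 0) <= 0)%N.
  by have := prog_iterate R T n f tau p A hzr nu 0; rewrite pi0.
move=> h; rewrite (_ : (T <= _)%N = false) ?andbF; last by lia.
by rewrite /Phi pi0 /time mulr0 mulr0 subr0 expR0.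
Qed.

Lemma badby_Psi nu k : (badby nu k)%:R <= delta * Psi nu k.
Proof.
rewrite /Psi; case: ifP => B /=.
  by rewrite mulfV ?gt_eqF // mulr1n.
rewrite mulr0n; apply: mulr_ge0; first exact: ltW.
exact: expR_ge0.
Qed.

End Pot.


Section Fin.
Variables (R : realType) (n : nat) (p : R).
Hypotheses (hp0 : 0 <= p) (hp1 : p <= 1).
Local Notation V := {ffun 'I_n -> bool}.
Local Notation wt := (w R n p).

Fixpoint allseqs N : seq (seq V) :=
  if N is N'.+1 then [seq rcons h v | h <- allseqs N', v <- enum V]
  else [:: [::]].

Definition wseq (h : seq V) : R := \prod_(v <- h) wt v.

Definition Esum N (F : seq V -> R) := \sum_(h <- allseqs N) wseq h * F h.

Lemma wseq_ge0 h : 0 <= wseq h.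
Proof. by apply: prodr_ge0 => v _; apply: w_ge0. Qed.

Lemma Esum_S N F :
  Esum N.+1 F = Esum N (fun h => \sum_v wt v * F (rcons h v)).
Proof.
rewrite /Esum /= big_allpairs_dep /=; apply: eq_bigr => h _.
rewrite mulr_sumr big_enum /=; apply: eq_bigr => v _.
by rewrite /wseq big_rcons /= mulrA.
Qed.

Lemma Esum_le N F G : (forall h, F h <= G h) -> Esum N F <= Esum N G.
Proof. by move=> H; apply: ler_sum => h _; apply: ler_wpM2l; [apply: wseq_ge0|]. Qed.

Lemma Esum_scale N c F : Esum N (fun h => c * F h) = c * Esum N F.
Proof. by rewrite /Esum mulr_sumr; apply: eq_bigr => h _; ring. Qed.

Lemma allseqs_size N h : h \in allseqs N -> size h = N.
Proof.
elim: N h => [|N IH] h /=; first by rewrite inE => /eqP ->.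
case/allpairsPdep => h' [v [h'in _ ->]]; by rewrite size_rcons IH.
Qed.

Lemma allseqs_mem h : h \in allseqs (size h).
Proof.
elim/last_ind: h => [|h v IH]; first by rewrite inE.
rewrite size_rcons /=; apply/allpairsPdep; exists h, v; split=> //.
by rewrite mem_enum.
Qed.

End Fin.


Section Main.
Variables (R : realType) (T n : nat) (f : 'rV[R]_T -> R) (tau : 'I_n -> R)
  (p : R) (A : algorithm R T).
Hypothesis hprog : forall x, (prog (grad f x) <= (prog x).+1)%N.
Local Notation O := (sync_oracle (Gmap f p) tau).
Hypothesis hzr : zero_respecting O A.
Hypothesis hA : valid_algorithm A.
Hypotheses (hp0 : 0 <= p) (hp1 : p <= 1).
Variables (beta L delta t : R).
Hypotheses (hb : 0 <= beta) (hL : 0 <= L) (hd : 0 < delta).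
Hypothesis H1 : forall i : 'I_n,
  (expR beta - 1) * Num.min 1 (p * (i.+1)%:R) <= L * tau i.
Hypothesis H2 : - ln delta <= beta * T%:R - L * t.
Hypothesis hT : (0 < T)%N.

Local Notation V := {ffun 'I_n -> bool}.
Local Notation wt := (w R n p).
Local Notation PsiL := (Psi R T n f tau p A beta L delta t).
Local Notation badbyL := (badby R T n f tau p A t).

Definition nz (h : seq V) : nat -> 'I_n -> bool :=
  fun k i => nth [ffun=> false] h k i.

Definition Psi' h := PsiL (nz h) (size h).

Lemma super h : \sum_v wt v * Psi' (rcons h v) <= Psi' h.
Proof.
have E v : Psi' (rcons h v) = PsiL (upd n (nz h) (size h) v) (size h).+1.
  rewrite /Psi' size_rcons.
  apply: (agree_Psi R T n f tau p A hp0 hp1 beta L delta t hb hL hd H2) => j i lt.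
  rewrite /nz /upd nth_rcons.
  have [lt'|ge] := ltnP j (size h); first by rewrite (ltn_eqF lt').
  have -> : j = size h by apply/eqP; rewrite eqn_leq ge andbT -ltnS.
  by rewrite eqxx.
under eq_bigr => v _ do rewrite E.
exact: (Psi_step R T n f tau p A hprog hzr hA hp0 hp1 beta L delta t hb hL hd H1 H2).
Qed.

Lemma Esum_Psi N : Esum R n p N Psi' <= 1.
Proof.
elim: N => [|N IH].
  rewrite /Esum /= big_seq1 /wseq big_nil mul1r /Psi' /=.
  by rewrite (Psi0 R T n f tau p A hzr hp0 hp1 beta L delta t hb hL hd H2).
rewrite Esum_S; apply: le_trans IH; apply: (Esum_le R n p hp0 hp1) => h; exact: super.
Qed.

Lemma Esum_bad N : Esum R n p N (fun h => (badbyL (nz h) (size h))%:R) <= delta.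
Proof.
apply: (le_trans (Esum_le R n p hp0 hp1 N _ _
   (fun h => badby_Psi R T n f tau p A beta L delta t hd (nz h) (size h)))).
rewrite Esum_scale; apply: (@le_trans _ _ (delta * 1)); last by rewrite mulr1.
apply: ler_wpM2l; first exact: ltW.
exact: Esum_Psi.
Qed.

End Main.


Section Meas.
Variables (R : realType) (T n : nat) (f : 'rV[R]_T -> R) (tau : 'I_n -> R)
  (p : R) (A : algorithm R T).
Hypothesis hprog : forall x, (prog (grad f x) <= (prog x).+1)%N.
Local Notation O := (sync_oracle (Gmap f p) tau).
Hypothesis hzr : zero_respecting O A.
Hypothesis hA : valid_algorithm A.
Hypotheses (hp0 : 0 <= p) (hp1 : p <= 1).
Variables (beta L delta t : R).
Hypotheses (hb : 0 <= beta) (hL : 0 <= L) (hd : 0 < delta).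
Hypothesis H1 : forall i : 'I_n,
  (expR beta - 1) * Num.min 1 (p * (i.+1)%:R) <= L * tau i.
Hypothesis H2 : - ln delta <= beta * T%:R - L * t.
Hypothesis hT : (0 < T)%N.
Variables (d : measure_display) (Omega : measurableType d)
  (P : probability Omega R) (xi : Omega -> nat -> 'I_n -> bool).
Hypothesis hxi : iid_bernoulli_noise P p xi.

Local Notation V := {ffun 'I_n -> bool}.
Local Notation badbyL := (badby R T n f tau p A t).
Local Notation badL := (bad R T n f tau p A t).

Lemma agree_badby nu nu' k : (forall j i, (j < k)%N -> nu j i = nu' j i) ->
  badbyL nu k = badbyL nu' k.
Proof.
move=> H.
by have [_ _ _ _ B] := agree_all R T n f tau p A hp0 hp1 beta L delta t hb hL hd H2 nu nu' k H; apply: B.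
Qed.

Definition cyl (h : seq V) :=
  [set w | forall k i, (k < size h)%N -> xi w k i = nz n h k i].

Lemma cyl_meas h : measurable (cyl h).
Proof.
rewrite (_ : cyl h = \bigcap_(k in `I_(size h)) \bigcap_(i in [set: 'I_n])
                       [set w | xi w k i = nz n h k i]).
  apply: fin_bigcap_measurable; first exact: finite_II.
  move=> k _; apply: fin_bigcap_measurable; first exact: finite_finset.
  move=> i _; case: (nz n h k i); first exact: hxi.1.
  rewrite (_ : [set w | xi w k i = false] = ~` [set w | xi w k i]).
    by apply: measurableC; exact: hxi.1.
  by apply/seteqP; split => w /=; case: (xi w k i).
apply/seteqP; split => w /=.
  by move=> H k /= lt i _; apply: H.
by move=> H k i lt; apply: (H k lt i).
Qed.

Lemma P_cyl h : P (cyl h) = (wseq R n p h)%:E.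
Proof.
rewrite /cyl (hxi.2 (size h) (nz n h)); congr (_%:E).
rewrite /wseq (big_nth [ffun=> false]) big_mkord; apply: eq_bigr => k _.
by rewrite /w; apply: eq_bigr => i _.
Qed.

Lemma mem_bigsetU (s : seq (seq V)) (Pb : pred (seq V)) (F : seq V -> set Omega) w :
  (\big[setU/set0]_(h <- s | Pb h) F h) w <->
  exists h, [/\ h \in s, Pb h & F h w].
Proof.
elim: s => [|h s IH]; rewrite ?big_nil ?big_cons.
  by split => // [[h [] ]].
case: ifP => Ph.
  split.
    case=> [Fh|/IH [h' [h's Ph' Fh']]]; first by exists h; rewrite mem_head.
    by exists h'; rewrite inE h's orbT.
  case=> h' [] /[!inE] /orP [/eqP -> _ Fh|h's Ph' Fh']; first by left.
  by right; apply/IH; exists h'.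
split.
  by move=> /IH [h' [h's Ph' Fh']]; exists h'; rewrite inE h's orbT.
case=> h' [] /[!inE] /orP [/eqP -> |h's Ph' Fh']; first by rewrite Ph.
by apply/IH; exists h'.
Qed.

Local Open Scope ereal_scope.

Lemma subadd (s : seq (seq V)) (Pb : pred (seq V)) :
  P (\big[setU/set0]_(h <- s | Pb h) cyl h) <= \sum_(h <- s | Pb h) P (cyl h).
Proof.
elim: s => [|h s IH]; first by rewrite !big_nil measure0.
rewrite !big_cons; case: ifP => _ //.
apply: le_trans (measureU2 _ _ _) _; [exact: cyl_meas|by apply: bigsetU_measurable => *; exact: cyl_meas|].
exact: leeD2l.
Qed.

Local Close Scope ereal_scope.

Definition B N := [set w | badbyL (xi w) N].

Lemma B_eq N : B N = \big[setU/set0]_(h <- allseqs n N | badbyL (nz n h) N) cyl h.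
Proof.
apply/seteqP; split => w.
  move=> Hb; apply/mem_bigsetU.
  set h := [seq [ffun i => xi w k i] | k <- iota 0 N].
  have sh : size h = N by rewrite size_map size_iota.
  have ag : forall k i, (k < N)%N -> nz n h k i = xi w k i.
    by move=> k i lt; rewrite /nz (nth_map 0) ?size_iota // nth_iota // add0n ffunE.
  exists h; split.
  - by have := allseqs_mem n h; rewrite sh.
  - by rewrite (agree_badby _ (xi w)).
  - by move=> k i; rewrite sh => lt; rewrite ag.
move=> /mem_bigsetU [h [hin Pb cw]].
have sh := allseqs_size _ _ _ hin.
rewrite /B /= (agree_badby _ (nz n h)) // => j i lt; apply: cw; by rewrite sh.
Qed.

Lemma B_meas N : measurable (B N).
Proof. by rewrite B_eq; apply: bigsetU_measurable => *; exact: cyl_meas. Qed.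

Lemma PB N : (P (B N) <= delta%:E)%E.
Proof.
rewrite B_eq; apply: (le_trans (subadd _ _)).
under eq_bigr => h _ do rewrite P_cyl.
rewrite sumEFin lee_fin.
apply: le_trans (Esum_bad R T n f tau p A hprog hzr hA hp0 hp1 beta L delta t hb hL hd H1 H2 hT N).
rewrite /Esum big_mkcond /= big_seq [leRHS]big_seq; apply: ler_sum => h hin.
rewrite (allseqs_size _ _ _ hin); case: (badbyL (nz n h) N) => /=.
  by rewrite mulr1n mulr1.
by rewrite mulr0n mulr0.
Qed.

End Meas.


Section Fin2.
Variables (R : realType) (T n : nat) (f : 'rV[R]_T -> R) (tau : 'I_n -> R)
  (p : R) (A : algorithm R T).
Hypothesis hprog : forall x, (prog (grad f x) <= (prog x).+1)%N.
Local Notation O := (sync_oracle (Gmap f p) tau).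
Hypothesis hzr : zero_respecting O A.
Hypothesis hA : valid_algorithm A.
Hypotheses (hp0 : 0 <= p) (hp1 : p <= 1).
Variables (beta L delta t : R).
Hypotheses (hb : 0 <= beta) (hL : 0 <= L) (hd : 0 < delta).
Hypothesis H1 : forall i : 'I_n,
  (expR beta - 1) * Num.min 1 (p * (i.+1)%:R) <= L * tau i.
Hypothesis H2 : - ln delta <= beta * T%:R - L * t.
Hypothesis hT : (0 < T)%N.
Variables (d : measure_display) (Omega : measurableType d)
  (P : probability Omega R) (xi : Omega -> nat -> 'I_n -> bool).
Hypothesis hxi : iid_bernoulli_noise P p xi.

Local Notation badbyL := (badby R T n f tau p A t).
Local Notation badL := (bad R T n f tau p A t).
Local Notation BL := (B R T n f tau p A t d Omega xi).

Lemma badby_ex nu N : badbyL nu N -> exists j, badL nu j.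
Proof.
elim: N => [|N IH] /=; first by move=> h; exists 0%N.
by case/orP => [/IH //|h]; exists N.+1.
Qed.

Lemma bad_badby nu j : badL nu j -> badbyL nu j.
Proof. by case: j => [//|j] /= ->; rewrite orbT. Qed.

Lemma main_sec : ((1 - delta)%:E <= P [set w | forall k : nat,
       (time O A (xi w) k <= t)%R -> (prog (iterate O A (xi w) k) < T)%N])%E.
Proof.
have mB N : measurable (BL N) by exact: (B_meas R T n f tau p A hp0 hp1 beta L delta t hb hL hd H2 d Omega P xi hxi N).
have mU : measurable (\bigcup_N BL N) by exact: bigcupT_measurable.
have nd : nondecreasing_seq BL.
  move=> a b ab; rewrite subsetEset; elim: b ab => [|b IH].
    by rewrite leqn0 => /eqP ->.
  rewrite leq_eqVlt => /orP [/eqP -> //|lt] w Bw.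
  by rewrite /B /= (IH lt w Bw).
have PU : (P (\bigcup_N BL N) <= delta%:E)%E.
  apply: (cvge_to_le (nondecreasing_cvg_mu mB mU nd)).
  apply: nearW => N; exact: (PB R T n f tau p A hprog hzr hA hp0 hp1 beta L delta t hb hL hd H1 H2 hT d Omega P xi hxi).
have -> : [set w | forall k : nat,
       (time O A (xi w) k <= t)%R -> (prog (iterate O A (xi w) k) < T)%N]
   = ~` (\bigcup_N BL N).
  apply/seteqP; split => w /=.
    move=> H [N _ bN]; have [j /andP [tj pj]] := badby_ex _ _ bN.
    by have := H j tj; rewrite ltnNge pj.
  move=> nU k tk; rewrite ltnNge; apply/negP => pk; apply: nU.
  by exists k => //; apply: bad_badby; rewrite /bad tk pk.
rewrite probability_setC // EFinB; exact: leeB.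
Qed.

End Fin2.


Lemma ar6 (R : realFieldType) (a T t : R) : 0 <= a -> 1 <= T -> a <= a * T - 0 * t.
Proof. move=> *; nra. Qed.
Lemma ar7 (R : realFieldType) (t D X : R) : t <= 2^-1 * (D * X) -> 2 * t <= X * D.
Proof. move=> *; lra. Qed.
Lemma ar8 (R : realFieldType) (e e' : R) : 0 < e -> e * e' = 1 -> 2^-1 <= e' -> e <= 2.
Proof. move=> *; nra. Qed.
Lemma ar9 (R : realFieldType) (x : R) : 0 < x -> Num.min 1 x * (1 + (4 * x)^-1) <= 2.
Proof.
move=> x0; set m := Num.min 1 x; set y := (4 * x)^-1.
have m1 : m <= 1 by rewrite /m ge_min lexx.
have mx : m <= x by rewrite /m ge_min lexx orbT.
have y0 : 0 <= y by rewrite /y invr_ge0; lra.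
have xy : x * y = 4^-1 by rewrite /y invfM mulrCA mulfV ?mulr1 // gt_eqF.
have : m * y <= x * y by apply: ler_wpM2r.
move=> *; lra.
Qed.
Lemma ar10 (R : realFieldType) (Lt T l : R) : Lt <= T / 2 + l -> - l <= 2^-1 * T - Lt.
Proof. move=> *; lra. Qed.
Lemma ar11 (R : realFieldType) (e m : R) : e <= 2 -> 0 <= m -> (e - 1) * m <= m.
Proof. move=> *; nra. Qed.

Theorem mainTheorem16 (R : realType) (T n : nat) (hT : (0 < T)%N)
  (f : 'rV[R]_T -> R)
  (hdiff : forall x, differentiable f x)
  (hprog : forall x, (prog (grad f x) <= (prog x).+1)%N)
  (tau : 'I_n -> R)
  (htau_pos : forall i, 0 < tau i)
  (htau_mono : forall i j : 'I_n, (i <= j)%N -> tau i <= tau j)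
  (p : R) (hp0 : 0 < p) (hp1 : p <= 1)
  (d : measure_display) (Omega : measurableType d) (P : probability Omega R)
  (xi : Omega -> nat -> 'I_n -> bool)
  (hxi : iid_bernoulli_noise P p xi)
  (A : algorithm R T)
  (hA : valid_algorithm A)
  (hzr : zero_respecting (sync_oracle (Gmap f p) tau) A)
  (delta : R) (hd0 : 0 < delta) (hd1 : delta <= 1)
  (t : R) (ht0 : 0 <= t)
  (ht : forall m : 'I_n,
     t <= 2^-1 * (tau m * (1 + (4 * p * (m.+1)%:R)^-1)
                  * (T%:R / 2 + ln delta))) :
  ((1 - delta)%:E <=
  P [set w | forall k : nat,
       (time (sync_oracle (Gmap f p) tau) A (xi w) k <= t)%R ->
       (prog (iterate (sync_oracle (Gmap f p) tau) A (xi w) k) < T)%N])%E.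
Proof.
have hp0' : 0 <= p := ltW hp0.
have T1 : 1 <= T%:R :> R by rewrite ler1n.
have [n0|npos] := eqVneq n 0%N.
  apply: (main_sec R T n f tau p A hprog hzr hA hp0' hp1 (- ln delta) 0 delta t
            _ _ hd0 _ _ hT d Omega P xi hxi).
  - by rewrite oppr_ge0 ln_le0.
  - by [].
  - move=> i; exfalso; have := ltn_ord i; move: (nat_of_ord i) => k; by rewrite n0.
  - apply: ar6 => //; by rewrite oppr_ge0 ln_le0.
set X := T%:R / 2 + ln delta.
set K := fun i : 'I_n => 1 + (4 * p * (i.+1)%:R)^-1.
have Kpos i : 0 < K i.
  rewrite /K; apply: ltr_wpDr; last exact: ltr01.
  by rewrite invr_ge0; apply: mulr_ge0 => //; apply: mulr_ge0.
have Dpos i : 0 < tau i * K i by apply: mulr_gt0.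
set c := fun i : 'I_n => 2 / (tau i * K i).
have ct i : c i * t <= X.
  rewrite /c mulrAC ler_pdivrMr //; apply: ar7; exact: ht.
have X0 : 0 <= X.
  have npos' : (0 < n)%N by rewrite lt0n.
  pose i0 : 'I_n := Ordinal npos'.
  have h := le_trans ht0 (ht i0).
  have : 0 <= tau i0 * K i0 * X.
    by move: h; rewrite pmulr_rge0 // invr_gt0 ltr0n.
  by rewrite pmulr_rge0 //; exact: Dpos.
set L := \big[Num.max/0]_(i < n) c i.
have hL : 0 <= L by apply: bigmax_ge_id.
have hLc i : c i <= L by apply: le_bigmax.
have Lt : L * t <= X.
  have [t0|tpos] := eqVneq t 0; first by rewrite t0 mulr0.
  have tp : 0 < t by rewrite lt_neqAle eq_sym tpos ht0.
  rewrite -ler_pdivlMr //; apply: bigmax_le; first by apply: divr_ge0.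
  by move=> i _; rewrite ler_pdivlMr.
have e2 : expR (2^-1 : R) <= 2.
  apply: (ar8 _ _ _ (expR_gt0 _) (expRxMexpNx_1 _)).
  by have := expR_ge1Dx (- 2^-1 : R); rewrite (_ : 1 + - 2^-1 = 2^-1 :> R) //; field.
apply: (main_sec R T n f tau p A hprog hzr hA hp0' hp1 (2^-1) L delta t
          _ hL hd0 _ _ hT d Omega P xi hxi).
- by rewrite invr_ge0 ler0n.
- move=> i.
  have m0 : 0 <= Num.min 1 (p * (i.+1)%:R) by rewrite le_min ler01 /= mulr_ge0.
  apply: (le_trans (ar11 _ _ _ e2 m0)).
  apply: (@le_trans _ _ (c i * tau i)); last by apply: ler_wpM2r; [exact: ltW|].
  have -> : c i * tau i = 2 / K i.
    by rewrite /c; field; rewrite !gt_eqF //; apply: htau_pos.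
  rewrite ler_pdivlMr // /K.
  have -> : 4 * p * (i.+1)%:R = 4 * (p * (i.+1)%:R) by rewrite mulrA.
  by apply: ar9; apply: mulr_gt0.
- exact: ar10.
Qed.
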